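(* Let $p_1,p_2\ge 0$ with $p_1+p_2\le 1$. For every $n\ge 1$, the expected value of the subtree number index of the random polyphenylene chain $RPC(n,p_1,p_2)$ is \[ E(\mathrm{STN}(RPC(n,p_1,p_2)))=\frac{441}{(11+4p_1+p_2)^2}(12+4p_1+p_2)^n+\frac{144p_1+36p_2-45}{11+4p_1+p_2}\,n-\frac{441}{(11+4p_1+p_2)^2}. \]
   Context: For a graph $G$, $\mathrm{STN}(G)$ is the number of nonempty subtrees of $G$ (subgraphs that are trees, single vertices included). A polyphenylene chain with $n$ hexagons consists of hexagons (6-cycles) $H_1,\dots,H_n$, pairwise vertex-disjoint, where for each $i=1,\dots,n-1$ one vertex of $H_i$ is joined to one vertex of $H_{i+1}$ by a single edge (a cut edge), and there are no other edges. For $2\le i\le n-1$, the hexagon $H_i$ has two distinct vertices incident to cut edges (toward $H_{i-1}$ and $H_{i+1}$); their distance in $H_i$ is $1$ (ortho), $2$ (meta) or $3$ (para). The random polyphenylene chain $RPC(n,p_1,p_2)$ is built by stepwise addition of terminal hexagons: for $n\le 2$ the chain is unique, and at each step $i=3,\dots,n$, the new hexagon $H_i$ is attached by a cut edge to a vertex of $H_{i-1}$ that is at distance $1$ (ortho) from the vertex of $H_{i-1}$ attached to $H_{i-2}$ with probability $p_1$, at distance $2$ (meta) with probability $p_2$, and at distance $3$ (para) with probability $1-p_1-p_2$, independently at each step. *)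

(* Defs.v *)
From mathcomp Require Import all_boot all_order all_algebra.
From mathcomp Require Import boolp.
Set Implicit Arguments. Unset Strict Implicit. Unset Printing Implicit Defensive.
Import Order.TTheory GRing.Theory Num.Theory.

(* A simple graph is given by a symmetric irreflexive relation [g] on a finType.
   A subgraph is a pair (S, F) of a vertex set S and a set F of edges of g
   (edges as 2-element vertex sets {u,v}) with both endpoints in S. *)

Definition edge_rel (T : finType) (F : {set {set T}}) : rel T :=
  fun x y => [set x; y] \in F.

Definition is_subtree (T : finType) (g : rel T) (S : {set T}) (F : {set {set T}}) : Prop :=
  [/\ S != set0,
      (forall e, e \in F ->
         exists u v, [/\ u \in S, v \in S, g u v & e = [set u; v]]),
      (forall u v, u \in S -> v \in S -> connect (edge_rel F) u v)
    & ~ (exists s : seq T, [/\ uniq s, (2 < size s)%N & cycle (edge_rel F) s])].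

Definition STN (T : finType) (g : rel T) : nat :=
  #|[set x : {set T} * {set {set T}} | `[< is_subtree g x.1 x.2 >]]|.

(* Vertices: (i, k) = vertex k (k = 0..5, in cyclic order) of hexagon H_{i+1}. *)
Definition hex_adj (a b : 'I_6) : bool :=
  (a.+1 %% 6 == b :> nat) || (b.+1 %% 6 == a :> nat).

(* Attachment types: t is a sequence over 'I_3, 0 = ortho, 1 = meta, 2 = para;
   the j-th entry (0-based) is the type chosen at step j+3, i.e. the distance
   in hexagon H_{j+2} between its two cut-edge vertices is j-th entry + 1.
   Convention: each hexagon H_{i+1} with i >= 1 receives the cut edge from its
   predecessor at its vertex 0; the outgoing cut edge of H_1 leaves from vertex
   0, and that of H_{h+1} (h >= 1) leaves from vertex (t_{h-1} + 1), which is
   at distance t_{h-1}+1 from vertex 0. *)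
Definition out_pos (t : seq 'I_3) (h : nat) : nat :=
  if h == 0%N then 0%N else (nth ord0 t h.-1).+1.

Definition pc_adj (n : nat) (t : seq 'I_3) : rel ('I_n * 'I_6) :=
  fun u v =>
    [|| (u.1 == v.1) && hex_adj u.2 v.2,
        [&& (v.1 == u.1.+1 :> nat), (u.2 == out_pos t u.1 :> nat) & (v.2 == 0%N :> nat)]
      | [&& (u.1 == v.1.+1 :> nat), (v.2 == out_pos t v.1 :> nat) & (u.2 == 0%N :> nat)]].

Local Open Scope ring_scope.

Definition step_prob (R : pzRingType) (p1 p2 : R) (k : 'I_3) : R :=
  if (k == 0 :> nat) then p1 else if (k == 1 :> nat) then p2 else 1 - p1 - p2.

Definition E_STN_RPC (R : pzRingType) (p1 p2 : R) (n : nat) : R :=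
  \sum_(t : (n - 2).-tuple 'I_3)
     (\prod_(k <- t) step_prob p1 p2 k) * (STN (@pc_adj n t))%:R.

(* Main.v *)
Require Import Defs.
From mathcomp Require Import all_boot all_order all_algebra.
Import Order.TTheory GRing.Theory Num.Theory.
From mathcomp Require Import boolp.
From mathcomp Require Import zify.
From mathcomp Require Import ring lra.
Set Implicit Arguments. Unset Strict Implicit. Unset Printing Implicit Defensive.

Section Basic.
Variable T : finType.

Lemma edge_rel_sym (F : {set {set T}}) : symmetric (edge_rel F).
Proof. by move=> x y; rewrite /edge_rel setUC. Qed.

Lemma set2_eq (x y u v : T) : [set x; y] = [set u; v] ->
  (x = u /\ y = v) \/ (x = v /\ y = u).
Proof.
move=> E.
have hx : x \in [set u; v] by rewrite -E set21.
have hy : y \in [set u; v] by rewrite -E set22.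
have hu : u \in [set x; y] by rewrite E set21.
have hv : v \in [set x; y] by rewrite E set22.
move: hu hv; case/set2P: hx => ex; case/set2P: hy => ey; subst;
  move=> /set2P [eu|eu] /set2P [ev|ev]; subst; auto.
Qed.

Lemma conn_mono (F F' : {set {set T}}) x y : F \subset F' ->
  connect (edge_rel F) x y -> connect (edge_rel F') x y.
Proof.
move=> sub; apply: connect_sub => u v h; apply: connect1.
by rewrite /edge_rel (subsetP sub).
Qed.

Lemma next2_neq (s : seq T) x : uniq s -> 2 < size s -> x \in s ->
  next s (next s x) != x.
Proof.
move=> us ss xs; case: (rot_to xs) => i s' def.
rewrite -!(next_rot i us) def.
have : uniq (x :: s') by rewrite -def rot_uniq.
have : 2 < size (x :: s') by rewrite -def size_rot.
case: s' {def} => [|y [|z r]] //= _ /andP[] xn /andP[yn _].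
have xy : (x == y) = false.
  by apply/negbTE; apply: contra xn => /eqP->; exact: mem_head.
have xz : (z == x) = false.
  by apply/negbTE; apply: contra xn => /eqP->; rewrite !inE eqxx orbT.
have yx : (y == x) = false by rewrite eq_sym.
by rewrite eqxx yx eqxx xz.
Qed.

Lemma transition (s : seq T) (P : pred T) x y : uniq s -> x \in s -> y \in s ->
  P x -> ~~ P y -> exists2 z, z \in s & P z && ~~ P (next s z).
Proof.
move=> us xs ys Px Py.
have : fconnect (next s) x y by rewrite (fconnect_cycle (cycle_next us) xs).
case/connectP => p; elim: p x xs Px => [|z p IH] x xs Px /=.
  by move=> _ eyx; rewrite eyx Px in Py.
case/andP => /eqP nx pth ey.
case Pz: (P z).
  by apply: (IH z _ Pz pth ey); subst z; rewrite mem_next.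
by exists x => //; subst z; rewrite Px Pz.
Qed.

Lemma cardsU_disj (K : finType) (X Y : {set K}) :
  X :&: Y = set0 -> #|X :|: Y| = #|X| + #|Y|.
Proof. by move=> h; rewrite cardsU h cards0 subn0. Qed.

End Basic.

Section Generic.
Variable T : finType.
Variable g : rel T.
Hypothesis gsym : symmetric g.

Definition edges_ok (S : {set T}) (F : {set {set T}}) :=
  forall e, e \in F -> exists u v, [/\ u \in S, v \in S, g u v & e = [set u; v]].

Lemma edge_info S F x y : edges_ok S F -> edge_rel F x y -> [/\ x \in S, y \in S & g x y].
Proof.
move=> HF /HF [u [v [uS vS guv E]]].
by case: (set2_eq E) => [[-> ->]|[-> ->]]; split => //; rewrite gsym.
Qed.

Lemma mem_edge S F e x : edges_ok S F -> e \in F -> x \in e -> x \in S.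
Proof. by move=> HF /HF [u [v [uS vS _ ->]]] /set2P [->|->]. Qed.

Definition STset (U : {set T}) : {set {set T} * {set {set T}}} :=
  [set x | `[< is_subtree g x.1 x.2 >] & x.1 \subset U].
Definition STv (U : {set T}) (v : T) := [set x in STset U | v \in x.1].

Lemma STsetP (U : {set T}) x : reflect (is_subtree g x.1 x.2 /\ x.1 \subset U) (x \in STset U).
Proof.
rewrite inE; apply: (iffP andP) => [[/asboolP ? ?]|[? ?]]; split => //.
exact/asboolP.
Qed.

Section Cut.
Variables (A B : {set T}) (a0 b0 : T).
Hypotheses (dAB : [disjoint A & B]) (Aa0 : a0 \in A) (Bb0 : b0 \in B) (gab : g a0 b0).
Hypothesis cut : forall x y, x \in A -> y \in B -> g x y -> x = a0 /\ y = b0.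

Lemma AnB x : x \in A -> x \in B -> False.
Proof. by move=> xA; rewrite (disjointFr dAB xA). Qed.

Lemma cut' x y : x \in B -> y \in A -> g x y -> x = b0 /\ y = a0.
Proof. by move=> xB yA gxy; rewrite gsym in gxy; case: (cut yA xB gxy). Qed.

Definition jn (x1 x2 : {set T} * {set {set T}}) :=
  (x1.1 :|: x2.1, x1.2 :|: x2.2 :|: [set [set a0; b0]]).

Lemma jn_subtree S1 F1 S2 F2 :
  is_subtree g S1 F1 -> S1 \subset A -> a0 \in S1 ->
  is_subtree g S2 F2 -> S2 \subset B -> b0 \in S2 ->
  is_subtree g (S1 :|: S2) (F1 :|: F2 :|: [set [set a0; b0]]).
Proof.
case=> [ne1 ed1 cn1 ac1] sA a1 [ne2 ed2 cn2 ac2] sB b2.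
set F := F1 :|: F2 :|: _.
have ed : edges_ok (S1 :|: S2) F.
  move=> e; rewrite !inE => /orP[/orP[/ed1|/ed2]|/eqP->].
  - by case=> u [v [uS vS guv ->]]; exists u, v; split => //; rewrite inE ?uS ?vS.
  - by case=> u [v [uS vS guv ->]]; exists u, v; split => //; rewrite inE ?uS ?vS ?orbT.
  - by exists a0, b0; split => //; rewrite inE ?a1 ?b2 ?orbT.
have sF1 : F1 \subset F by apply/subsetP => e he; rewrite /F !inE he.
have sF2 : F2 \subset F by apply/subsetP => e he; rewrite /F !inE he orbT.
have cF : [set a0; b0] \in F by rewrite /F !inE eqxx orbT.
have ca : forall u, u \in S1 :|: S2 -> connect (edge_rel F) u a0.
  move=> u; rewrite inE => /orP[uS|uS].
    exact: conn_mono sF1 (cn1 _ _ uS a1).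
  apply: connect_trans (conn_mono sF2 (cn2 _ _ uS b2)) _.
  by apply: connect1; rewrite /edge_rel setUC.
split.
- by apply/set0Pn; exists a0; rewrite inE a1.
- exact: ed.
- move=> u v uS vS; apply: connect_trans (ca u uS) _.
  by rewrite (sym_connect_sym (@edge_rel_sym _ F)) ca.
- case=> s [us ss cs].
  have sS : forall x, x \in s -> x \in S1 :|: S2.
    by move=> x xs; case: (edge_info ed (next_cycle cs xs)).
  have inA : {in A &, subrel (edge_rel F) (edge_rel F1)}.
    move=> x y xA yA; rewrite /edge_rel !inE => /orP[/orP[//|h]|/eqP h].
    - case: (edge_info ed2 h) => xS _ _.
      by case: (AnB xA (subsetP sB _ xS)).
    - case: (set2_eq h) => [[_ yb]|[xb _]].
        by case: (AnB yA); rewrite yb.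
      by case: (AnB xA); rewrite xb.
  have inB : {in B &, subrel (edge_rel F) (edge_rel F2)}.
    move=> x y xB yB; rewrite /edge_rel !inE => /orP[/orP[h|//]|/eqP h].
    - case: (edge_info ed1 h) => xS _ _.
      by case: (AnB (subsetP sA _ xS) xB).
    - case: (set2_eq h) => [[xa _]|[_ ya]].
        by case: (AnB _ xB); rewrite xa.
      by case: (AnB _ yB); rewrite ya.
  case: (boolP (all (mem A) s)) => [allA|nallA].
    by apply: ac1; exists s; split => //; apply: (sub_in_cycle inA) cs.
  case: (boolP (all (mem B) s)) => [allB|nallB].
    by apply: ac2; exists s; split => //; apply: (sub_in_cycle inB) cs.
  have AorB : forall x, x \in s -> (x \in A) || (x \in B).
    move=> x /sS; rewrite inE => /orP[/(subsetP sA) ->//|/(subsetP sB) ->]; by rewrite orbT.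
  move: nallA nallB; rewrite -!has_predC => /hasP [x xs xnA] /hasP [y ys ynB].
  have xB : x \in B by case/orP: (AorB x xs) => // xA; rewrite /= xA in xnA.
  have yA : y \in A by case/orP: (AorB y ys) => // yB; rewrite /= yB in ynB.
  have [z zs /andP [zA nzA]] := transition (P := mem A) us ys xs yA xnA.
  have [w ws /andP [wB nwB]] := transition (P := mem B) us xs ys xB ynB.
  have nzB : next s z \in B.
    by case/orP: (AorB _ (etrans (mem_next s z) zs)) => // h; rewrite /= h in nzA.
  have nwA : next s w \in A.
    by case/orP: (AorB _ (etrans (mem_next s w) ws)) => // h; rewrite /= h in nwB.
  have [_ _ g1] := edge_info ed (next_cycle cs zs).
  have [_ _ g2] := edge_info ed (next_cycle cs ws).
  have [ez enz] := cut zA nzB g1.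
  have [ew enw] := cut' wB nwA g2.
  have := next2_neq us ss zs.
  by rewrite enz -ew enw ez eqxx.
Qed.

Section Split.
Variables (S : {set T}) (F : {set {set T}}).
Hypotheses (tS : is_subtree g S F) (sU : S \subset A :|: B)
  (nA : ~~ (S \subset A)) (nB : ~~ (S \subset B)).

Let SAB x : x \in S -> (x \in A) || (x \in B).
Proof. by move=> xS; rewrite -in_setU (subsetP sU). Qed.

Lemma cutF : [set a0; b0] \in F.
Proof.
case: tS => [ne ed cn ac].
case/subsetPn: nA => u uS uA.
case/subsetPn: nB => v vS vB.
have uB : u \in B by case/orP: (SAB uS) => // h; rewrite h in uA.
have vA : v \in A by case/orP: (SAB vS) => // h; rewrite h in vB.
have cross : forall p x, path (edge_rel F) x p -> x \in A -> last x p \in B ->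
    [set a0; b0] \in F.
  elim=> [|z p IH] x /=.
    by move=> _ xA xB; case: (AnB xA xB).
  case/andP => exz pz xA lB.
  have [xS zS gxz] := edge_info ed exz.
  case/orP: (SAB zS) => [zA|zB]; first exact: IH pz zA lB.
  by case: (cut xA zB gxz) => ex ez; rewrite -ex -ez.
case/connectP: (cn v u vS uS) => p pth lst.
by apply: (cross p v) => //; rewrite -lst.
Qed.

Lemma restrA : is_subtree g (S :&: A) [set e in F | e \subset A] /\ a0 \in S.
Proof.
have cF := cutF.
case: tS => [ne ed cn ac].
have [a0S _ _] := edge_info ed cF.
set FA := [set e in F | e \subset A].
have stay : forall p x, path (edge_rel F) x p -> last x p \in A ->
    (x \in A -> connect (edge_rel FA) x (last x p)) /\
    (x \in B -> connect (edge_rel FA) a0 (last x p)).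
  elim=> [|z p IH] x /=.
    by move=> _ xA; split => // xB; case: (AnB xA xB).
  case/andP => exz pz lA.
  have [xS zS gxz] := edge_info ed exz.
  have [IH1 IH2] := IH z pz lA.
  split => [xA|xB]; case/orP: (SAB zS) => [zA|zB].
  - apply: connect_trans (IH1 zA); apply: connect1.
    by rewrite /edge_rel inE; apply/andP; split => //; rewrite subUset !sub1set xA zA.
  - by case: (cut xA zB gxz) => -> _; exact: IH2 zB.
  - have gzx : g z x by rewrite gsym.
    by case: (cut zA xB gzx) => ez _; rewrite -ez; exact: IH1 zA.
  - exact: IH2 zB.
split => //; split.
- by apply/set0Pn; exists a0; rewrite inE a0S.
- move=> e; rewrite inE => /andP [eF eA].
  case: (ed e eF) => u [v [uS vS guv ee]].
  exists u, v; split => //; rewrite inE ?uS ?vS (subsetP eA) // ee ?set21 ?set22 //.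
- move=> u w; rewrite !inE => /andP [uS uA] /andP [wS wA].
  case/connectP: (cn u w uS wS) => p pth lst.
  have lA : last u p \in A by rewrite -lst.
  have [h _] := stay p u pth lA.
  by rewrite lst; apply: h.
- case=> s [us ss cs]; apply: ac; exists s; split => //.
  by apply: sub_cycle cs => x y; rewrite /edge_rel inE => /andP[].
Qed.

End Split.

Lemma Fdecomp S F : is_subtree g S F -> S \subset A :|: B ->
  ~~ (S \subset A) -> ~~ (S \subset B) ->
  F = [set e in F | e \subset A] :|: [set e in F | e \subset B] :|: [set [set a0; b0]].
Proof.
move=> tS sU nA nB.
have cF := cutF tS sU nA nB.
case: tS => [ne ed cn ac].
apply/setP => e; rewrite !inE.
apply/idP/idP; last first.
  by case/orP => [/orP[/andP[]|/andP[]]//|/eqP->].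
move=> eF; rewrite eF /=.
case: (ed e eF) => u [v [uS vS guv ee]].
have sUB : forall x, x \in S -> (x \in A) || (x \in B).
  by move=> x xS; rewrite -in_setU (subsetP sU).
rewrite ee !subUset !sub1set.
case/orP: (sUB u uS) => [uA|uB]; case/orP: (sUB v vS) => [vA|vB].
- by rewrite uA vA.
- by case: (cut uA vB guv) => -> ->; rewrite eqxx !orbT.
- have gvu : g v u by rewrite gsym.
  by case: (cut vA uB gvu) => -> ->; rewrite setUC eqxx !orbT.
- by rewrite uB vB orbT.
Qed.

Lemma rsA_jn S1 F1 S2 F2 : is_subtree g S1 F1 -> S1 \subset A ->
  is_subtree g S2 F2 -> S2 \subset B ->
  (S1 :|: S2) :&: A = S1 /\
  [set e in F1 :|: F2 :|: [set [set a0; b0]] | e \subset A] = F1.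
Proof.
case=> [_ ed1 _ _] sA [_ ed2 _ _] sB; split.
  apply/setP => x; rewrite !inE.
  case x1: (x \in S1); first by rewrite (subsetP sA).
  case x2: (x \in S2) => //=.
  by apply/negP => xA; apply: (AnB xA (subsetP sB _ x2)).
apply/setP => e; rewrite !inE.
case e1: (e \in F1).
  case: (ed1 e e1) => u [v [uS vS _ ->]].
  by rewrite subUset !sub1set !(subsetP sA).
case e2: (e \in F2) => /=.
  case: (ed2 e e2) => u [v [uS vS _ ->]].
  apply/negP; rewrite subUset !sub1set => /andP [uA _].
  exact: (AnB uA (subsetP sB _ uS)).
apply/negP => /andP [/eqP -> ]; rewrite subUset !sub1set => /andP [_ bA].
exact: (AnB bA Bb0).
Qed.

End Cut.

Section Card.
Variables (A B : {set T}) (a0 b0 : T).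
Hypotheses (dAB : [disjoint A & B]) (Aa0 : a0 \in A) (Bb0 : b0 \in B) (gab : g a0 b0).
Hypothesis cut : forall x y, x \in A -> y \in B -> g x y -> x = a0 /\ y = b0.

Let dBA : [disjoint B & A]. Proof. by rewrite disjoint_sym. Qed.
Let gba : g b0 a0. Proof. by rewrite gsym. Qed.
Let cutBA := cut' cut.

Let AnB' x : x \in A -> x \in B -> False.
Proof. by move=> xA; rewrite (disjointFr dAB xA). Qed.

Definition J (x : ({set T} * {set {set T}}) * ({set T} * {set {set T}})) :=
  jn a0 b0 x.1 x.2.

Lemma STv_mem U v x : (x \in STv U v) = [&& `[< is_subtree g x.1 x.2 >], x.1 \subset U & v \in x.1].
Proof. by rewrite !inE andbA. Qed.

Lemma J_inj : {in setX (STv A a0) (STv B b0) &, injective J}.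
Proof.
move=> [[S1 F1] [S2 F2]] [[S1' F1'] [S2' F2']].
rewrite !in_setX !STv_mem /= => /andP[/and3P[/asboolP t1 s1 _] /and3P[/asboolP t2 s2 _]]
  /andP[/and3P[/asboolP t1' s1' _] /and3P[/asboolP t2' s2' _]].
rewrite /J /jn /= => [[ES EF]].
have [hS1 hF1] := rsA_jn a0 dAB Bb0 t1 s1 t2 s2.
have [hS1' hF1'] := rsA_jn a0 dAB Bb0 t1' s1' t2' s2'.
have [hS2 hF2] := rsA_jn b0 dBA Aa0 t2 s2 t1 s1.
have [hS2' hF2'] := rsA_jn b0 dBA Aa0 t2' s2' t1' s1'.
have e1 : S1 = S1' by rewrite -hS1 -hS1' ES.
have e2 : F1 = F1' by rewrite -hF1 -hF1' EF.
have e3 : S2 = S2' by rewrite -hS2 -hS2' setUC ES setUC.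
have e4 : F2 = F2'.
  rewrite -hF2 -hF2' [F2 :|: F1]setUC [F2' :|: F1']setUC [[set b0; a0]]setUC EF //.
by rewrite e1 e2 e3 e4.
Qed.

Lemma STset_cut : STset (A :|: B) =
  STset A :|: STset B :|: J @: setX (STv A a0) (STv B b0).
Proof.
apply/setP => -[S F]; apply/idP/idP.
- case/STsetP => /= tS sU.
  case: (boolP (S \subset A)) => sA.
    by rewrite !in_setU; apply/orP; left; apply/orP; left; apply/STsetP.
  case: (boolP (S \subset B)) => sB.
    by rewrite !in_setU; apply/orP; left; apply/orP; right; apply/STsetP.
  have [tA a0S] := restrA dAB Aa0 cut tS sU sA sB.
  have sU' : S \subset B :|: A by rewrite setUC.
  have [tB b0S] := restrA dBA Bb0 cutBA tS sU' sB sA.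
  have eF := Fdecomp dAB cut tS sU sA sB.
  rewrite inE; apply/orP; right; apply/imsetP.
  exists ((S :&: A, [set e in F | e \subset A]), (S :&: B, [set e in F | e \subset B])).
    rewrite in_setX !STv_mem /= !subsetIr !inE a0S b0S Aa0 Bb0 /= !andbT.
    by apply/andP; split; apply/asboolP.
  rewrite /J /jn /= -eF -setIUr.
  by have /setIidPl -> := sU.
- rewrite !in_setU => /orP [/orP [h|h]|h].
  + case/STsetP: h => t sA; apply/STsetP; split => //.
    by apply: subset_trans sA (subsetUl _ _).
  + case/STsetP: h => t sB; apply/STsetP; split => //.
    by apply: subset_trans sB (subsetUr _ _).
  + case/imsetP: h => -[[S1 F1] [S2 F2]].
    rewrite in_setX !STv_mem /= => /andP[/and3P[/asboolP t1 s1 a1] /and3P[/asboolP t2 s2 b2]].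
    rewrite /J /jn /= => -[-> ->].
    apply/STsetP; split; last by rewrite /=; exact: setUSS s1 s2.
    by have := jn_subtree dAB Aa0 Bb0 gab cut t1 s1 a1 t2 s2 b2.
Qed.

Lemma J_b0 x : x \in setX (STv A a0) (STv B b0) -> b0 \in (J x).1.
Proof.
case: x => -[S1 F1] [S2 F2]; rewrite in_setX !STv_mem /= => /andP[_ /and3P[_ _ b2]].
by rewrite /J /jn /= inE b2 orbT.
Qed.

Lemma J_a0 x : x \in setX (STv A a0) (STv B b0) -> a0 \in (J x).1.
Proof.
case: x => -[S1 F1] [S2 F2]; rewrite in_setX !STv_mem /= => /andP[/and3P[_ _ a1] _].
by rewrite /J /jn /= inE a1.
Qed.

Theorem card_cut : #|STset (A :|: B)| =
  #|STset A| + #|STset B| + #|STv A a0| * #|STv B b0|.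
Proof.
rewrite STset_cut cardsU_disj; last first.
  apply/setP => x; rewrite in_setI in_setU in_set0; apply/negP => /andP [h /imsetP [y yX ey]].
  case/orP: h => /STsetP [_ sx].
  - by apply: (AnB' (subsetP sx _ _) Bb0); rewrite ey J_b0.
  - by apply: (AnB' Aa0 (subsetP sx _ _)); rewrite ey J_a0.
rewrite cardsU_disj; last first.
  apply/setP => x; rewrite in_setI in_set0; apply/negP => /andP [/STsetP [[ne _ _ _] sA] /STsetP [_ sB]].
  case/set0Pn: ne => y yx.
  exact: (AnB' (subsetP sA _ yx) (subsetP sB _ yx)).
by rewrite (card_in_imset J_inj) cardsX.
Qed.

Theorem card_cut_v v : v \in A -> #|STv (A :|: B) v| =
  #|STv A v| + #|[set y in STv A a0 | v \in y.1]| * #|STv B b0|.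
Proof.
move=> vA.
have sub : setX [set y in STv A a0 | v \in y.1] (STv B b0) \subset setX (STv A a0) (STv B b0).
  by apply: setXS => //; apply/subsetP => y; rewrite inE => /andP[].
have E : STv (A :|: B) v = STv A v :|: J @: setX [set y in STv A a0 | v \in y.1] (STv B b0).
  apply/setP => x; rewrite [in LHS]inE STset_cut.
  apply/idP/idP.
  - case/andP => /setUP [/setUP [hA|hB]|hI] vx.
    + by rewrite inE; apply/orP; left; rewrite inE hA.
    + case/STsetP: hB => _ sB.
      by case: (AnB' vA (subsetP sB _ vx)).
    + case/imsetP: hI => -[[S1 F1] [S2 F2]] hX ex.
      rewrite inE; apply/orP; right; apply/imsetP; exists ((S1, F1), (S2, F2)) => //.
      move: hX vx; rewrite ex !in_setX !STv_mem /= => /andP[/and3P[t1 s1 a1] /and3P[t2 s2 b2]].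
      rewrite /J /jn /= inE => /orP [v1|v2].
        by rewrite !inE t1 s1 a1 v1 t2 s2 b2.
      by case: (AnB' vA (subsetP s2 _ v2)).
  - rewrite inE => /orP [h|/imsetP [y yX ->]].
      move: h; rewrite inE => /andP [h vx]; rewrite vx andbT.
      by rewrite !in_setU h.
    have yX' := subsetP sub _ yX.
    apply/andP; split.
      by rewrite in_setU; apply/orP; right; apply/imsetP; exists y.
    case: y yX {yX'} => -[S1 F1] [S2 F2]; rewrite in_setX inE => /andP [/andP [_ v1] _].
    by rewrite /J /jn /= inE v1.
rewrite E cardsU_disj; last first.
  apply/setP => x; rewrite in_setI in_set0; apply/negP => /andP [].
  rewrite /STv inE => /andP [/STsetP [_ sx] _] /imsetP [y yX ey].
  by apply: (AnB' (subsetP sx _ _) Bb0); rewrite ey J_b0 // (subsetP sub).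
rewrite (card_in_imset (sub_in2 (subsetP sub) J_inj)) cardsX.
by [].
Qed.

End Card.
End Generic.

Definition distn (a w : nat) := (w + 6 - a) %% 6.
Definition hexn (a b : nat) := (a.+1 %% 6 == b) || (b.+1 %% 6 == a).

Lemma all_iota6 (Q : nat -> bool) : all Q (iota 0 6) -> forall a, a < 6 -> Q a.
Proof. by move=> /allP H a ha; apply: H; rewrite mem_iota. Qed.

Definition all6 (Q : nat -> bool) := all Q (iota 0 6).

Lemma N1 : all6 (fun w => hexn w (w.+1 %% 6)). Proof. by []. Qed.
Lemma N2 : all6 (fun w => (w.+1 %% 6).+1 %% 6 != w). Proof. by []. Qed.
Lemma N3 : all6 (fun a => all6 (fun w => (distn a w < 5) ==> (distn a (w.+1 %% 6) == (distn a w).+1))).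
Proof. by []. Qed.
Lemma N5 : all6 (fun r => all6 (fun w => (r + distn r w) %% 6 == w)). Proof. by []. Qed.
Lemma N6 : all6 (fun r => all6 (fun j => distn r ((r + j) %% 6) == j)). Proof. by []. Qed.
Lemma N8 : all6 (fun w0 => all6 (fun a => all6 (fun b =>
  hexn a b ==> ~~ ((a == w0) && (b == w0.+1 %% 6)) ==> ~~ ((b == w0) && (a == w0.+1 %% 6)) ==>
  (distn (w0.+1 %% 6) b == (distn (w0.+1 %% 6) a).+1) ||
  (distn (w0.+1 %% 6) a == (distn (w0.+1 %% 6) b).+1)))).
Proof. by []. Qed.
Lemma N9 : all6 (fun r => all6 (fun w => all6 (fun lo => all6 (fun hi =>
  (lo <= hi) ==> ((distn ((r + lo) %% 6) w <= hi - lo) == (lo <= distn r w <= hi)) &&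
                 ((distn ((r + lo) %% 6) w < hi - lo) == (lo <= distn r w < hi)))))).
Proof. by []. Qed.
Lemma N10 : all6 (fun a => distn a a == 0). Proof. by []. Qed.
Lemma N12 : all6 (fun a => all6 (fun m => all6 (fun a' => all6 (fun m' =>
  all6 (fun w => ((distn a w <= m) == (distn a' w <= m')) && ((distn a w < m) == (distn a' w < m')))
  ==> (a == a') && (m == m'))))).
Proof. by []. Qed.

Definition cnt2 (d1 d2 : nat) :=
  \sum_(0 <= a < 6) \sum_(0 <= m < 6) ((distn a d1 <= m) && (distn a d2 <= m) : nat).

Lemma cnt66 (P : nat -> nat -> bool) :
  #|[set i : 'I_6 * 'I_6 | P i.1 i.2]| = \sum_(0 <= a < 6) \sum_(0 <= m < 6) P a m.
Proof.
transitivity (\sum_(a : 'I_6) \sum_(m : 'I_6) (P a m : nat)).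
  rewrite pair_bigA /= -sum1_card big_mkcond; apply: eq_bigr => -[a m] _.
  by rewrite inE /=; case: (P a m).
rewrite big_mkord; apply: eq_bigr => a _; by rewrite big_mkord.
Qed.

Definition dist6 (a w : 'I_6) : nat := distn a w.
Definition vat (r : 'I_6) (j : nat) : 'I_6 := Ordinal (ltn_pmod (r + j) (isT : 0 < 6)).

Lemma dist_lt a w : dist6 a w < 6.
Proof. exact: ltn_pmod. Qed.

Lemma hex_adj_ordS (w : 'I_6) : hex_adj w (ordS w).
Proof. exact: (all_iota6 N1 (ltn_ord w)). Qed.

Lemma ordS2 (w : 'I_6) : ordS (ordS w) != w.
Proof. rewrite -val_eqE /=; exact: (all_iota6 N2 (ltn_ord w)). Qed.

Lemma distS a w : dist6 a w < 5 -> dist6 a (ordS w) = (dist6 a w).+1.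
Proof.
move=> h; apply/eqP; move: (all_iota6 (all_iota6 N3 (ltn_ord a)) (ltn_ord w)).
by rewrite /dist6 in h *; rewrite h.
Qed.

Lemma vat_dist r w : vat r (dist6 r w) = w.
Proof. apply: val_inj => /=; apply/eqP; exact: (all_iota6 (all_iota6 N5 (ltn_ord r)) (ltn_ord w)). Qed.

Lemma dist_vat r j : j < 6 -> dist6 r (vat r j) = j.
Proof. move=> hj; apply/eqP; exact: (all_iota6 (all_iota6 N6 (ltn_ord r)) hj). Qed.

Lemma ordS_vat r j : ordS (vat r j) = vat r j.+1.
Proof. by apply: val_inj => /=; rewrite -addn1 modnDml addn1 addnS. Qed.

Lemma vat0 r : vat r 0 = r.
Proof. by apply: val_inj => /=; rewrite addn0 modn_small. Qed.

Lemma dist_self a : dist6 a a = 0.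
Proof. apply/eqP; exact: (all_iota6 N10 (ltn_ord a)). Qed.

Lemma dist_step (w0 a b : 'I_6) : hex_adj a b -> ~~ ((a == w0) && (b == ordS w0)) ->
  ~~ ((b == w0) && (a == ordS w0)) ->
  (dist6 (ordS w0) b == (dist6 (ordS w0) a).+1) || (dist6 (ordS w0) a == (dist6 (ordS w0) b).+1).
Proof.
have := all_iota6 (all_iota6 (all_iota6 N8 (ltn_ord w0)) (ltn_ord a)) (ltn_ord b).
move=> H hab n1 n2; move: H; change (is_true (hexn a b)) in hab.
rewrite -!val_eqE /= in n1 n2; rewrite /dist6 hab n1 n2 /=.
by [].
Qed.

Lemma AF (r w : 'I_6) lo hi : lo <= hi -> hi < 6 ->
  (dist6 (vat r lo) w <= hi - lo) = (lo <= dist6 r w <= hi) /\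
  (dist6 (vat r lo) w < hi - lo) = (lo <= dist6 r w < hi).
Proof.
move=> lh h6; have l6 : lo < 6 by apply: leq_ltn_trans h6.
have := all_iota6 (all_iota6 (all_iota6 (all_iota6 N9 (ltn_ord r)) (ltn_ord w)) l6) h6.
by rewrite lh /= => /andP [/eqP -> /eqP ->].
Qed.

Section Hex.
Variables (N : nat) (t : seq 'I_3).
Local Notation T := ('I_N * 'I_6)%type.
Local Notation g := (@pc_adj N t).

Lemma pc_sym : symmetric g.
Proof.
move=> [i a] [j b]; rewrite /pc_adj /hex_adj /= (eq_sym j i).
by rewrite (orbC (b.+1 %% 6 == a :> nat)) [X in _ || X]orbC.
Qed.

Variable k : 'I_N.
Definition Hk : {set T} := [set x : T | x.1 == k].
Definition hv (w : 'I_6) : T := (k, w).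
Definition E6 (w : 'I_6) : {set T} := [set hv w; hv (ordS w)].
Definition arcS (a m : 'I_6) : {set T} := [set x : T | (x.1 == k) && (dist6 a x.2 <= m)].
Definition arcF (a m : 'I_6) : {set {set T}} := E6 @: [set w : 'I_6 | dist6 a w < m].
Definition emb (i : 'I_6 * 'I_6) := (arcS i.1 i.2, arcF i.1 i.2).

Lemma hvE x : x \in Hk -> x = hv x.2.
Proof. by case: x => i w; rewrite inE /= => /eqP ->. Qed.

Lemma hv_Hk w : hv w \in Hk.
Proof. by rewrite inE. Qed.

Lemma hv_inj : injective hv.
Proof. by move=> a b []. Qed.

Lemma g_Hk x y : x \in Hk -> y \in Hk -> g x y = hex_adj x.2 y.2.
Proof.
move=> /hvE -> /hvE ->; rewrite /pc_adj /= eqxx /=.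
by rewrite (ltn_eqF (ltnSn k)) /= orbF.
Qed.

Lemma E6_g w : g (hv w) (hv (ordS w)).
Proof. by rewrite g_Hk ?hv_Hk //= hex_adj_ordS. Qed.

Lemma E6_inj : injective E6.
Proof.
move=> w w' /set2_eq [[/hv_inj -> _]|[/hv_inj e1 /hv_inj e2]] //.
by move: (ordS2 w'); rewrite -e1 e2 eqxx.
Qed.

Lemma E6_arcF a m w : (E6 w \in arcF a m) = (dist6 a w < m).
Proof. by rewrite /arcF mem_imset ?inE //; exact: E6_inj. Qed.

Lemma hv_arcS a m w : (hv w \in arcS a m) = (dist6 a w <= m).
Proof. by rewrite inE /= eqxx. Qed.

Section Pos.
Variables (S : {set T}) (F : {set {set T}}) (w0 : 'I_6).
Hypotheses (sH : S \subset Hk) (ed : edges_ok g S F) (nE : E6 w0 \notin F).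
Let pos (x : T) := dist6 (ordS w0) x.2.

Lemma hstep x y : edge_rel F x y ->
  [/\ x \in S, y \in S & (pos y == (pos x).+1) || (pos x == (pos y).+1)].
Proof.
move=> exy; have [xS yS gxy] := edge_info pc_sym ed exy.
have xH := subsetP sH _ xS; have yH := subsetP sH _ yS.
rewrite (g_Hk xH yH) in gxy.
rewrite /edge_rel in exy.
split => //; apply: dist_step gxy _ _.
- apply/negP => /andP [/eqP xw /eqP yw]; move: nE.
  by rewrite /E6 -yw -xw -(hvE xH) -(hvE yH) exy.
- apply/negP => /andP [/eqP yw /eqP xw]; move: nE.
  by rewrite /E6 -xw -yw -(hvE xH) -(hvE yH) setUC exy.
Qed.

Lemma pos_inj x y : x \in Hk -> y \in Hk -> pos x = pos y -> x = y.
Proof.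
move=> /hvE -> /hvE -> e; congr hv.
have e' : dist6 (ordS w0) x.2 = dist6 (ordS w0) y.2 := e.
by rewrite -(vat_dist (ordS w0) x.2) -(vat_dist (ordS w0) y.2) e'.
Qed.

Lemma hex_acyclic : ~ (exists s, [/\ uniq s, 2 < size s & cycle (edge_rel F) s]).
Proof.
move=> [s [us ss cs]].
have [x0 x0s] : exists x0, x0 \in s.
  by case: s ss {us cs} => [|x0 s'] //= _; exists x0; rewrite mem_head.
case: (@arg_maxnP _ x0 (mem s) pos x0s) => xm xms xmax.
have e1 := prev_cycle cs xms; have e2 := next_cycle cs xms.
have y1s : prev s xm \in s by rewrite mem_prev.
have y2s : next s xm \in s by rewrite mem_next.
have [y1S xS st1] := hstep e1.
have [_ y2S st2] := hstep e2.
have l1 := xmax _ y1s; have l2 := xmax _ y2s.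
have p1 : pos xm = (pos (prev s xm)).+1.
  case/orP: st1 => /eqP // h; by move: l1; rewrite /= h ltnn.
have p2 : pos xm = (pos (next s xm)).+1.
  case/orP: st2 => /eqP // h; by move: l2; rewrite /= h ltnn.
have e : prev s xm = next s xm.
  apply: pos_inj; [exact: subsetP sH _ y1S | exact: subsetP sH _ y2S |].
  by apply: succn_inj; rewrite -p1 -p2.
have := next2_neq us ss y1s.
by rewrite next_prev // -e eqxx.
Qed.

End Pos.

Lemma emb_sub i : is_subtree g (emb i).1 (emb i).2 /\ (emb i).1 \subset Hk.
Proof.
case: i => a m /=.
have sH : arcS a m \subset Hk by apply/subsetP => x; rewrite !inE => /andP[].
have ed : edges_ok g (arcS a m) (arcF a m).
  move=> e /imsetP [w]; rewrite inE => hw ->.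
  exists (hv w), (hv (ordS w)); split => //; rewrite ?E6_g // hv_arcS.
    exact: ltnW.
  have h5 : dist6 a w < 5 by apply: leq_trans hw _; rewrite -ltnS ltn_ord.
  by rewrite distS.
split => //; split => //.
- by apply/set0Pn; exists (hv a); rewrite hv_arcS dist_self.
- have C : forall j, j <= m -> connect (edge_rel (arcF a m)) (hv a) (hv (vat a j)).
    elim=> [|j IH] hj; first by rewrite vat0 connect0.
    apply: connect_trans (IH (ltnW hj)) _; apply: connect1.
    have j5 : j < 5 by apply: leq_trans hj _; rewrite -ltnS ltn_ord.
    rewrite /edge_rel -ordS_vat E6_arcF dist_vat //.
    exact: ltn_trans j5 _.
  have C' : forall u, u \in arcS a m -> connect (edge_rel (arcF a m)) (hv a) u.
    move=> u uS; have uH := subsetP sH _ uS.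
    rewrite (hvE uH) -(vat_dist a u.2); apply: C.
    by move: uS; rewrite (hvE uH) hv_arcS.
  move=> u v uS vS; apply: connect_trans (C' v vS).
  by rewrite (sym_connect_sym (@edge_rel_sym _ _)) C'.
- apply: (@hex_acyclic _ _ (vat a 5) sH ed).
  by rewrite E6_arcF dist_vat // -leqNgt -ltnS ltn_ord.
Qed.

Lemma char x : x \in STset g Hk -> exists i, x = emb i.
Proof.
case: x => S F /STsetP [[ne ed cn ac] sH] /=.
have [w0 nE] : exists w0, E6 w0 \notin F.
  case: (pickP (fun w => E6 w \notin F)) => [w0 h|h]; first by exists w0.
  exfalso; apply: ac.
  have hall : forall w, E6 w \in F by move=> w; move: (h w) => /= /negbFE.
  pose o j := vat ord0 j.
  exists (map hv [:: o 0; o 1; o 2; o 3; o 4; o 5]); split.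
  - by rewrite (map_inj_uniq hv_inj).
  - by [].
  - have Hj : forall j, edge_rel F (hv (o j)) (hv (o j.+1)).
      by move=> j; rewrite /edge_rel /o -ordS_vat; exact: hall.
    have e6 : o 6 = o 0 by apply: val_inj.
    have H5 := Hj 5; rewrite e6 in H5.
    by rewrite /= !Hj H5.
set r := ordS w0.
have step := hstep sH ed nE.
have posE : forall x, x \in Hk -> x = hv (vat r (dist6 r x.2)).
  by move=> x xH; rewrite vat_dist -hvE.
have orient : forall u v, u \in Hk -> v \in Hk ->
    dist6 r v.2 = (dist6 r u.2).+1 -> [set u; v] = E6 u.2.
  move=> u v uH vH h; rewrite /E6 {1}(hvE uH) (hvE vH); congr [set _; hv _].
  by rewrite -(vat_dist r v.2) -(vat_dist r u.2) ordS_vat h.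
case/set0Pn: ne => x0 x0S.
case: (@arg_minnP _ x0 (mem S) (fun x => dist6 r x.2) x0S) => xl xlS xlmin.
case: (@arg_maxnP _ x0 (mem S) (fun x => dist6 r x.2) x0S) => xh xhS xhmax.
have W : forall p x, path (edge_rel F) x p -> forall j,
    dist6 r x.2 <= j < dist6 r (last x p).2 -> E6 (vat r j) \in F.
  elim=> [|z p IH] x /=.
    by move=> _ j /andP [a b]; move: (leq_ltn_trans a b); rewrite ltnn.
  case/andP => exz pz j /andP [lj jl].
  have [xS zS st] := step _ _ exz.
  have xH := subsetP sH _ xS; have zH := subsetP sH _ zS.
  case/orP: st => /eqP hz.
  - case: (ltngtP j (dist6 r x.2)) lj => // [lt _|eq _].
      by apply: (IH z pz); rewrite hz lt jl.
    rewrite eq vat_dist -(orient _ _ xH zH hz).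
    exact: exz.
  - by apply: (IH z pz); rewrite jl andbT; apply: leq_trans lj; rewrite hz.
set lo := dist6 r xl.2; set hi := dist6 r xh.2.
have hl : lo <= hi by apply: xlmin.
have h6 : hi < 6 := dist_lt _ _.
have EF : forall j, lo <= j < hi -> E6 (vat r j) \in F.
  move=> j hj; case/connectP: (cn xl xh xlS xhS) => p pth lst.
  by apply: (W p xl pth); rewrite -lst.
have inS : forall x, x \in Hk -> (x \in S) = (lo <= dist6 r x.2 <= hi).
  move=> x xH; apply/idP/idP.
    by move=> xS; apply/andP; split; [exact: xlmin | exact: xhmax].
  case/andP => a b; case: (ltngtP (dist6 r x.2) hi) b => // [lt _|eq _].
    have eF := EF _ (introT andP (conj a lt)).
    apply: (mem_edge ed eF); by rewrite /E6 {1}(posE x xH) set21.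
  have -> // : x = xh.
  by rewrite (posE x xH) (posE xh (subsetP sH _ xhS)) eq.
have hm : hi - lo < 6 by apply: leq_ltn_trans (leq_subr _ _) h6.
exists (vat r lo, Ordinal hm); rewrite /emb /=; congr pair.
  apply/setP => x; rewrite inE.
  case xH: (x \in Hk).
    rewrite inS // (AF _ _ hl h6).1 andbC.
    by move: xH; rewrite inE => ->.
  have xS : (x \in S) = false.
    by apply/negbTE/negP => xS; move: (subsetP sH _ xS); rewrite xH.
  by move: xH; rewrite inE xS => ->.
apply/setP => e; apply/idP/imsetP.
  move=> eF; case: (ed e eF) => u [v [uS vS guv ee]].
  have uH := subsetP sH _ uS; have vH := subsetP sH _ vS.
  have euv : edge_rel F u v by rewrite /edge_rel -ee.
  have [_ _ st] := step _ _ euv.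
  case/orP: st => /eqP h.
  - exists u.2; last by rewrite ee (orient _ _ uH vH h).
    rewrite inE (AF _ _ hl h6).2.
    move: (uS) (vS); rewrite !inS // => /andP [-> _] /andP [_].
    by rewrite h.
  - exists v.2; last by rewrite ee setUC (orient _ _ vH uH h).
    rewrite inE (AF _ _ hl h6).2.
    move: (uS) (vS); rewrite !inS // => /andP [_] + /andP [-> _].
    by rewrite h.
case=> w; rewrite inE (AF _ _ hl h6).2 => hw ->.
by rewrite -(vat_dist r w); apply: EF.
Qed.

Lemma emb_inj : injective emb.
Proof.
move=> [a m] [a' m']; rewrite /emb /= => -[ES EF].
have h1 : forall w : 'I_6, (dist6 a w <= m) = (dist6 a' w <= m').
  by move=> w; rewrite -!hv_arcS ES.
have h2 : forall w : 'I_6, (dist6 a w < m) = (dist6 a' w < m').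
  by move=> w; rewrite -!E6_arcF EF.
have := all_iota6 (all_iota6 (all_iota6 (all_iota6 N12 (ltn_ord a)) (ltn_ord m)) (ltn_ord a')) (ltn_ord m').
move=> /implyP H.
have /andP [/eqP e1 /eqP e2] : (a == a' :> nat) && (m == m' :> nat).
  apply: H; apply/allP => w; rewrite mem_iota /= add0n => w6.
  have := h1 (Ordinal w6); have := h2 (Ordinal w6); rewrite /dist6 /= => -> ->.
  by rewrite !eqxx.
by congr pair; apply: val_inj.
Qed.

Lemma STset_Hk : STset g Hk = emb @: setT.
Proof.
apply/setP => x; apply/idP/imsetP.
  by case/char => i ->; exists i.
case=> i _ ->; have [h1 h2] := emb_sub i; exact/STsetP.
Qed.

Lemma card_emb_sub (Q : {set T} -> bool) :
  #|[set y in STset g Hk | Q y.1]| = #|[set i | Q (emb i).1]|.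
Proof.
suff -> : [set y in STset g Hk | Q y.1] = emb @: [set i | Q (emb i).1].
  by rewrite (card_imset _ emb_inj).
apply/setP => x; rewrite inE STset_Hk; apply/andP/imsetP.
  by case=> /imsetP [i _ ->] q; exists i; rewrite ?inE.
by case=> i; rewrite inE => q ->; split => //; apply: imset_f.
Qed.

Lemma card_Hk : #|STset g Hk| = 36.
Proof. by rewrite STset_Hk (card_imset _ emb_inj) cardsT card_prod card_ord. Qed.

Lemma card_Hk_v w : #|STv g Hk (hv w)| = 21.
Proof.
rewrite /STv (card_emb_sub (fun S => hv w \in S)).
under eq_finset do rewrite /emb /= hv_arcS.
rewrite (cnt66 (fun a m => distn a w <= m)).
by case: w => [[|[|[|[|[|[|//]]]]]] ?]; rewrite unlock.
Qed.

Lemma card_Hk_vw w1 w2 :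
  #|[set y in STv g Hk (hv w1) | hv w2 \in y.1]| = cnt2 w1 w2.
Proof.
have -> : [set y in STv g Hk (hv w1) | hv w2 \in y.1] =
          [set y in STset g Hk | (hv w1 \in y.1) && (hv w2 \in y.1)].
  by apply/setP => y; rewrite !inE andbA.
rewrite (card_emb_sub (fun S => (hv w1 \in S) && (hv w2 \in S))).
under eq_finset do rewrite /emb /= !hv_arcS.
by rewrite (cnt66 (fun a m => (distn a w1 <= m) && (distn a w2 <= m))).
Qed.

End Hex.

Lemma cnt2_vals : [/\ cnt2 1 0 = 16, cnt2 2 0 = 13 & cnt2 3 0 = 12].
Proof. by rewrite /cnt2 unlock. Qed.

Definition cc (c : 'I_3) : nat := if c == 0 :> nat then 16 else if c == 1 :> nat then 13 else 12.
Fixpoint Yf (s : seq 'I_3) : nat := if s is c :: s' then 21 + cc c * Yf s' else 21.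
Fixpoint Sf (s : seq 'I_3) : nat := if s is c :: s' then 36 + Sf s' + 21 * Yf s' else 36.

Lemma SfE c t : Sf (c :: t) = (36 + Sf t + 21 * Yf t)%N. Proof. by []. Qed.
Lemma YfE c t : Yf (c :: t) = (21 + cc c * Yf t)%N. Proof. by []. Qed.


Section Chain.
Variables (n : nat) (t : seq 'I_3).
Hypothesis st : size t = n.-1.
Local Notation T := ('I_n.+1 * 'I_6)%type.
Local Notation g := (@pc_adj n.+1 t).

Definition Bk (j : nat) : {set T} := [set x : T | j <= x.1].
Definition kk (j : nat) : 'I_n.+1 := inord j.

Lemma out_lt h : out_pos t h < 6.
Proof.
rewrite /out_pos; case: (h == 0) => //.
by apply: leq_ltn_trans (ltn_ord _) _.
Qed.

Definition ow (h : nat) : 'I_6 := Ordinal (out_lt h).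

Lemma kkE j : j <= n -> kk j = j :> nat.
Proof. by move=> h; rewrite /kk inordK. Qed.

Section Step.
Variable j : nat.
Hypothesis jn : j < n.

Let A := Hk (kk j).
Let B := Bk j.+1.
Let a0 := hv (kk j) (ow j).
Let b0 := hv (kk j.+1) ord0.

Lemma kj : kk j = j :> nat. Proof. exact: kkE (ltnW jn). Qed.
Lemma kj1 : kk j.+1 = j.+1 :> nat. Proof. exact: kkE jn. Qed.

Lemma Bk_split : Bk j = A :|: B.
Proof.
apply/setP => x; rewrite !inE leq_eqVlt -val_eqE /= kj.
by rewrite eq_sym.
Qed.

Lemma disAB : [disjoint A & B].
Proof.
rewrite -setI_eq0; apply/eqP/setP => x; rewrite !inE -val_eqE /= kj.
by apply/negbTE; apply/negP => /andP [/eqP -> ]; rewrite ltnn.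
Qed.

Lemma Aa0 : a0 \in A. Proof. exact: hv_Hk. Qed.
Lemma Bb0 : b0 \in B. Proof. by rewrite inE /= kj1. Qed.

Lemma gab : g a0 b0.
Proof.
by rewrite /pc_adj /= kj1 kj !eqxx /= orbT.
Qed.

Lemma cutj x y : x \in A -> y \in B -> g x y -> x = a0 /\ y = b0.
Proof.
case: x => i a; case: y => i' b; rewrite !inE /= => /eqP -> hy.
rewrite /pc_adj /= kj.
case/or3P.
- by case/andP => /eqP ei; move: hy; rewrite -ei kj ltnn.
- case/and3P => /eqP e1 /eqP e2 /eqP e3; split.
    by congr pair; apply: val_inj; rewrite /= e2.
  by congr pair; apply: val_inj; rewrite /= ?e1 ?e3 ?kj1.
- by case/and3P => /eqP e1; move: hy; rewrite e1 ltnNge leqnSn.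
Qed.

Lemma card_step :
  #|STset g (Bk j)| = 36 + #|STset g (Bk j.+1)| + 21 * #|STv g (Bk j.+1) (hv (kk j.+1) ord0)|.
Proof.
rewrite Bk_split (card_cut (@pc_sym _ t) disAB Aa0 Bb0 gab cutj).
by rewrite card_Hk card_Hk_v.
Qed.

Lemma card_step_v :
  #|STv g (Bk j) (hv (kk j) ord0)| =
  21 + cnt2 (ow j) 0 * #|STv g (Bk j.+1) (hv (kk j.+1) ord0)|.
Proof.
rewrite Bk_split (card_cut_v (@pc_sym _ t) disAB Aa0 Bb0 gab cutj (hv_Hk _ _)).
by rewrite card_Hk_v card_Hk_vw.
Qed.

End Step.

Lemma cc_cnt2 (c : 'I_3) : cnt2 (c.+1) 0 = cc c.
Proof.
have [e1 e2 e3] := cnt2_vals.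
by case: c => [[|[|[|//]]] ?]; rewrite /cc /=.
Qed.

Lemma Bk_last : Bk n = Hk (kk n).
Proof.
apply/setP => x; rewrite !inE -val_eqE /= kkE //.
by rewrite eqn_leq (leq_ord x.1).
Qed.

Lemma chain_rec i : i < n ->
  #|STset g (Bk (n - i))| = Sf (drop (n - i).-1 t) /\
  #|STv g (Bk (n - i)) (hv (kk (n - i)) ord0)| = Yf (drop (n - i).-1 t).
Proof.
elim: i => [|i IH] hi.
  rewrite subn0 Bk_last card_Hk card_Hk_v drop_oversize //.
  by rewrite st.
have [IH1 IH2] := IH (ltnW hi).
set j := n - i.+1.
have jn : j < n by rewrite /j; lia.
have j1 : j.+1 = n - i by rewrite /j; lia.
have dj : drop j.-1 t = nth ord0 t j.-1 :: drop j t.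
  rewrite (drop_nth ord0); last by rewrite st; rewrite /j; lia.
  by congr (_ :: drop _ t); rewrite /j; lia.
have oj : ow j = (nth ord0 t j.-1).+1 :> nat.
  by rewrite /= /out_pos; case: ifP => // /eqP; rewrite /j; lia.
split.
  rewrite card_step // j1 IH1 IH2 dj SfE.
  by rewrite -j1.
rewrite card_step_v // j1 IH2 dj YfE oj cc_cnt2.
by rewrite -j1.
Qed.

Lemma STN_chain : STN g = if n == 0 then 36 else 36 + Sf t + 21 * Yf t.
Proof.
have -> : STN g = #|STset g (Bk 0)|.
  rewrite /STN /STset; apply: eq_card => x; rewrite !inE.
  have -> : x.1 \subset Bk 0 by apply/subsetP => y _; rewrite inE.
  by rewrite andbT.
case: ifP => /eqP n0.
  have -> : Bk 0 = Hk (kk 0).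
    apply/setP => x; rewrite !inE -val_eqE /= kkE //.
    rewrite leq0n; apply/esym/eqP; have := ltn_ord x.1; move: (nat_of_ord x.1) => y; lia.
  by rewrite card_Hk.
have n1 : 0 < n by lia.
rewrite card_step //.
have hn : n.-1 < n by lia.
have [h1 h2] := chain_rec hn.
have e : n - n.-1 = 1 by lia.
rewrite e in h1 h2.
by rewrite h1 h2 drop0.
Qed.

End Chain.
Local Open Scope ring_scope.

Section Alg.
Variable R : realFieldType.
Variables p1 p2 : R.

Definition Ex m (f : seq 'I_3 -> R) :=
  \sum_(t : m.-tuple 'I_3) (\prod_(k <- t) step_prob p1 p2 k) * f t.

Lemma Ex_cons m f : Ex m.+1 f =
  \sum_(c : 'I_3) step_prob p1 p2 c * Ex m (fun t => f (c :: t)).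
Proof.
rewrite /Ex.
rewrite (reindex (fun p : 'I_3 * m.-tuple 'I_3 => [tuple of p.1 :: p.2])) /=; last first.
  exists (fun t : m.+1.-tuple 'I_3 => (thead t, [tuple of behead t])).
    by move=> [c t] _ /=; congr pair; apply: val_inj.
  by move=> t _; case/tupleP: t => c t; apply: val_inj.
rewrite -(pair_bigA _ (fun c (t : m.-tuple 'I_3) =>
   (\prod_(k <- c :: t) step_prob p1 p2 k) * f (c :: t))) /=.
apply: eq_bigr => c _; rewrite mulr_sumr; apply: eq_bigr => t _.
by rewrite big_cons mulrA.
Qed.

Lemma Ex_lin m (f h : seq 'I_3 -> R) a b :
  Ex m (fun t => a * f t + b * h t) = a * Ex m f + b * Ex m h.
Proof.
rewrite /Ex !mulr_sumr -big_split /=; apply: eq_bigr => t _; ring.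
Qed.

Lemma sum3 (F : 'I_3 -> R) : \sum_(c : 'I_3) F c = F (inord 0) + F (inord 1) + F (inord 2).
Proof.
rewrite !big_ord_recr big_ord0 /= add0r.
congr (_ + _ + _); congr F; apply: val_inj; by rewrite /= inordK.
Qed.

Lemma sp0 : step_prob p1 p2 (inord 0) = p1. Proof. by rewrite /step_prob inordK. Qed.
Lemma sp1 : step_prob p1 p2 (inord 1) = p2. Proof. by rewrite /step_prob inordK. Qed.
Lemma sp2 : step_prob p1 p2 (inord 2) = 1 - p1 - p2. Proof. by rewrite /step_prob inordK. Qed.
Lemma cc0 : cc (inord 0) = 16%N. Proof. by rewrite /cc inordK. Qed.
Lemma cc1 : cc (inord 1) = 13%N. Proof. by rewrite /cc inordK. Qed.
Lemma cc2 : cc (inord 2) = 12%N. Proof. by rewrite /cc inordK. Qed.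

Lemma Ex0 f : Ex 0 f = f [::].
Proof.
rewrite /Ex (big_pred1 [tuple]) ?big_nil ?mul1r //.
by move=> t; apply/esym/eqP; apply: tuple0.
Qed.

Lemma Ex1 m : Ex m (fun _ => 1) = 1.
Proof.
elim: m => [|m IH]; first by rewrite Ex0.
rewrite Ex_cons sum3 IH sp0 sp1 sp2; ring.
Qed.

Lemma ExY m : Ex m (fun t => (Yf t)%:R) * (11 + 4 * p1 + p2)
   = 21 * ((12 + 4 * p1 + p2) ^+ m.+1 - 1).
Proof.
elim: m => [|m IH]; first by rewrite Ex0 /= expr1; ring.
rewrite Ex_cons sum3.
have E c : Ex m (fun t => (Yf (c :: t))%:R) = 21 + (cc c)%:R * Ex m (fun t => (Yf t)%:R).
  transitivity (Ex m (fun t => 21 * 1 + (cc c)%:R * (Yf t)%:R)).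
    by apply: eq_bigr => t _; rewrite YfE natrD natrM mulr1.
  by rewrite (Ex_lin m (fun _ => 1) (fun t => (Yf t)%:R)) Ex1 mulr1.
rewrite !E cc0 cc1 cc2 sp0 sp1 sp2.
rewrite exprS.
set X := Ex m _ in IH *.
set b := (12 + 4 * p1 + p2) ^+ m.+1 in IH *.
transitivity (21 * (11 + 4 * p1 + p2) + (12 + 4 * p1 + p2) * (X * (11 + 4 * p1 + p2))); first ring.
rewrite IH; ring.
Qed.

Definition closedF (n : nat) : R :=
    441 / (11 + 4 * p1 + p2) ^+ 2 * (12 + 4 * p1 + p2) ^+ n
    + (144 * p1 + 36 * p2 - 45) / (11 + 4 * p1 + p2) * n%:R
    - 441 / (11 + 4 * p1 + p2) ^+ 2.


Lemma ExS (ha : 11 + 4 * p1 + p2 != 0) m : Ex m (fun t => (Sf t)%:R) = closedF m.+1.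
Proof.
elim: m => [|m IH].
  rewrite Ex0 /closedF /=. field. done.
rewrite Ex_cons sum3.
have E c : Ex m (fun t => (Sf (c :: t))%:R) =
   36 + Ex m (fun t => (Sf t)%:R) + 21 * Ex m (fun t => (Yf t)%:R).
  transitivity (Ex m (fun t => 36 * 1 + 1 * (1 * (Sf t)%:R + 21 * (Yf t)%:R))).
    by apply: eq_bigr => t _; rewrite SfE natrD natrD natrM mulr1 !mul1r addrA.
  rewrite (Ex_lin m (fun _ => 1) (fun t => (1 * (Sf t)%:R + 21 * (Yf t)%:R))) Ex1.
  rewrite (Ex_lin m (fun t => (Sf t)%:R) (fun t => (Yf t)%:R)).
  by rewrite !mul1r mulr1 addrA.
rewrite sp0 sp1 sp2 !E IH.
have HY := ExY m.
set X := Ex m (fun t => (Yf t)%:R) in HY *.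
rewrite /closedF.
have -> : X = 21 * ((12 + 4 * p1 + p2) ^+ m.+1 - 1) / (11 + 4 * p1 + p2).
  by rewrite -HY; field.
rewrite exprS.
have -> : (m.+2)%:R = m%:R + 2 :> R by rewrite -addn2 natrD.
have -> : (m.+1)%:R = m%:R + 1 :> R by rewrite -addn1 natrD.
move: ha; set a := 11 + 4 * p1 + p2; set b := 12 + 4 * p1 + p2.
have -> : b = a + 1 by rewrite /a /b; ring.
have -> : 144 * p1 + 36 * p2 - 45 = 36 * a - 441 by rewrite /a; ring.
rewrite [(a + 1) ^+ m.+2]exprS; set P := (a + 1) ^+ m.+1.
clearbody a P => ha.
by field.
Qed.

Theorem E_closed (ha : 11 + 4 * p1 + p2 != 0) m : Ex m (fun t => (Sf t)%:R) = closedF m.+1.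
Proof. exact: ExS. Qed.
End Alg.

Unset Implicit Arguments.


Theorem theorem4 (R : realFieldType) (p1 p2 : R) (n : nat) :
  0 <= p1 -> 0 <= p2 -> p1 + p2 <= 1 -> (1 <= n)%N ->
  E_STN_RPC p1 p2 n =
    441 / (11 + 4 * p1 + p2) ^+ 2 * (12 + 4 * p1 + p2) ^+ n
    + (144 * p1 + 36 * p2 - 45) / (11 + 4 * p1 + p2) * n%:R
    - 441 / (11 + 4 * p1 + p2) ^+ 2.
Proof.
move=> h1 h2 h12; case: n => [|n] // _.
have ha : 11 + 4 * p1 + p2 != 0.
  by apply: lt0r_neq0; lra.
rewrite -/(closedF p1 p2 n.+1).
transitivity (Ex p1 p2 (n.+1 - 2) (fun s => (STN (@pc_adj n.+1 s))%:R)); first by [].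
have E : forall m, (m = n.+1 - 2)%N -> Ex p1 p2 m (fun s => (STN (@pc_adj n.+1 s))%:R) =
    Ex p1 p2 m (fun s => (if n == 0%N then 36%N else (36 + Sf s + 21 * Yf s)%N)%:R).
  move=> m hm; apply: eq_bigr => s _; rewrite STN_chain //.
  by rewrite size_tuple hm; case: n {hm} => [|[|n]].
rewrite E //.
case: n E => [|m] _ /=.
  by rewrite Ex0 /closedF; field.
rewrite (_ : (m.+2 - 2)%N = m); last by rewrite !subSS subn0.
transitivity (Ex p1 p2 m.+1 (fun s => (Sf s)%:R)); last exact: E_closed.
rewrite Ex_cons sum3 sp0 sp1 sp2.
have -> : forall c, Ex p1 p2 m (fun t => (Sf (c :: t))%:R) = Ex p1 p2 m (fun s => (36 + Sf s + 21 * Yf s)%N%:R).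
  by [].
set X := Ex _ _ _ _; ring.
Qed.
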